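(* Let $m\ge 2$, $\omega=e^{2\pi i/m}$, and $$d_n(q)=\sum_{0\le k\le n}(-1)^k q^{\binom k2}\prod_{k+1\le t\le n}[t]_q .$$ Let $c=\min\{1-\cos(2\pi j/m):1\le j\le m-1\}$. Then for every $n\ge m$ and every $1\le j\le m-1$, $$\left|d_n(\omega^j)\right|\le (m-1)\left(\frac{2}{c}\right)^{(m-2)/2}.$$ In particular $|d_n(\omega^j)|$ is bounded independently of $n$.
   Context: $[t]_q=1+q+\cdots+q^{t-1}$ for $t\ge 1$, and an empty product equals $1$. (The polynomial $d_n(q)$ is the generating function $\sum_{\pi}q^{\mathrm{maj}(\pi)}$ of the major index over derangements of $[n]$.) *)

(* Defs.v *)
From Stdlib Require Import Reals List Arith.
Open Scope R_scope.

Record Cplx := mkC { re : R; im : R }.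

Definition C0 : Cplx := mkC 0 0.
Definition C1 : Cplx := mkC 1 0.
Definition Cadd (z w : Cplx) : Cplx := mkC (re z + re w) (im z + im w).
Definition Cmul (z w : Cplx) : Cplx :=
  mkC (re z * re w - im z * im w) (re z * im w + im z * re w).
Definition Copp (z : Cplx) : Cplx := mkC (- re z) (- im z).
Fixpoint Cpow (z : Cplx) (n : nat) : Cplx :=
  match n with O => C1 | S n' => Cmul z (Cpow z n') end.
Definition Cnorm (z : Cplx) : R := sqrt (re z * re z + im z * im z).

Definition Csum (l : list Cplx) : Cplx := fold_right Cadd C0 l.
Definition Cprod (l : list Cplx) : Cplx := fold_right Cmul C1 l.

Definition qint (q : Cplx) (t : nat) : Cplx := Csum (map (Cpow q) (seq 0 t)).

Definition dpoly (n : nat) (q : Cplx) : Cplx :=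
  Csum (map (fun k =>
          Cmul (Cpow (Copp C1) k)
            (Cmul (Cpow q (k * (k - 1) / 2))
                  (Cprod (map (qint q) (seq (S k) (n - k))))))
       (seq 0 (S n))).

Definition omega (m : nat) : Cplx :=
  mkC (cos (2 * PI / INR m)) (sin (2 * PI / INR m)).

(* Main.v *)
Require Import Defs.
From Stdlib Require Import Reals List Arith Lra Lia.
Require Import Defs.
Open Scope R_scope.

Lemma Ceq (z w : Cplx) : re z = re w -> im z = im w -> z = w.
Proof. destruct z, w; simpl; intros; subst; reflexivity. Qed.

Definition Csub z w := Cadd z (Copp w).

Lemma Cring : ring_theory C0 C1 Cadd Cmul Csub Copp (@eq Cplx).
Proof.
  constructor; intros; apply Ceq; unfold Csub, Cadd, Cmul, Copp, C0, C1; simpl; ring.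
Qed.
Add Ring CR : Cring.

Lemma Csum_app l1 l2 : Csum (l1 ++ l2) = Cadd (Csum l1) (Csum l2).
Proof. induction l1; simpl. ring. rewrite IHl1; ring. Qed.
Lemma Cprod_app l1 l2 : Cprod (l1 ++ l2) = Cmul (Cprod l1) (Cprod l2).
Proof. induction l1; simpl. ring. rewrite IHl1; ring. Qed.

Lemma Csum_mulr (f : nat -> Cplx) l c :
  Csum (map (fun k => Cmul (f k) c) l) = Cmul (Csum (map f l)) c.
Proof. induction l; simpl. ring. rewrite IHl; ring. Qed.

Lemma Cpow_add z a b : Cpow z (a + b) = Cmul (Cpow z a) (Cpow z b).
Proof. induction a; simpl. ring. rewrite IHa; ring. Qed.
Lemma Cpow_mul z a b : Cpow z (a * b) = Cpow (Cpow z a) b.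
Proof. induction b; simpl. rewrite Nat.mul_0_r; reflexivity.
  rewrite Nat.mul_succ_r, Cpow_add, IHb; ring. Qed.
Lemma Cpow_1 k : Cpow C1 k = C1.
Proof. induction k; simpl; [reflexivity| rewrite IHk; ring]. Qed.

Lemma dpoly_rec n q : dpoly (S n) q =
  Cadd (Cmul (dpoly n q) (qint q (S n)))
       (Cmul (Cpow (Copp C1) (S n)) (Cpow q (S n * n / 2))).
Proof.
  unfold dpoly. rewrite (seq_S (S n) 0), map_app, Csum_app. cbn [map]. unfold Csum at 2. cbn [fold_right].
  replace (0 + S n)%nat with (S n) by lia.
  replace (S n - S n)%nat with 0%nat by lia. change (seq (S (S n)) 0) with (@nil nat). cbn [map]. unfold Cprod at 2; cbn [fold_right].
  replace (S n * (S n - 1))%nat with (S n * n)%nat by (f_equal; lia).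
  rewrite <- Csum_mulr. f_equal. 2: ring.
  f_equal. apply map_ext_in. intros k Hk. apply in_seq in Hk.
  replace (S n - k)%nat with (S (n - k)) by lia.
  rewrite seq_S, map_app, Cprod_app. cbn [map]. unfold Cprod at 2; cbn [fold_right].
  replace (S k + (n - k))%nat with (S n) by lia. ring.
Qed.

Lemma qint_S q t : qint q (S t) = Cadd (qint q t) (Cpow q t).
Proof. unfold qint. rewrite seq_S, map_app, Csum_app. simpl. ring. Qed.

Lemma qint_geom q t : Cmul (qint q t) (Csub C1 q) = Csub C1 (Cpow q t).
Proof. induction t. unfold qint; simpl. ring.
  rewrite qint_S. simpl. transitivity (Cadd (Cmul (qint q t) (Csub C1 q)) (Cmul (Cpow q t) (Csub C1 q))). ring.
  rewrite IHt. ring. Qed.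

Lemma Cnorm_mul z w : Cnorm (Cmul z w) = Cnorm z * Cnorm w.
Proof. unfold Cnorm. rewrite <- sqrt_mult. f_equal. simpl; ring.
  destruct z; simpl; nra. destruct w; simpl; nra. Qed.

Lemma Cnorm_ge0 z : 0 <= Cnorm z.
Proof. apply sqrt_pos. Qed.

Lemma Cnorm_add z w : Cnorm (Cadd z w) <= Cnorm z + Cnorm w.
Proof.
  destruct z as [a b], w as [c d]. unfold Cnorm; simpl.
  set (A := a*a+b*b). set (B := c*c+d*d).
  assert (HA: 0 <= A) by (unfold A; nra). assert (HB: 0 <= B) by (unfold B; nra).
  apply Rsqr_incr_0_var. 2: pose proof (sqrt_pos A); pose proof (sqrt_pos B); lra.
  unfold Rsqr. rewrite sqrt_sqrt by (pose proof (Rle_0_sqr (a+c)); pose proof (Rle_0_sqr (b+d)); unfold Rsqr in *; lra).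
  replace ((sqrt A + sqrt B) * (sqrt A + sqrt B)) with (sqrt A * sqrt A + sqrt B * sqrt B + 2 * (sqrt A * sqrt B)) by ring.
  rewrite !sqrt_sqrt by assumption. rewrite <- sqrt_mult by assumption.
  assert (a*c+b*d <= sqrt (A*B)).
  { destruct (Rle_or_lt (a*c+b*d) 0). pose proof (sqrt_pos (A*B)); lra.
    rewrite <- (sqrt_square (a*c+b*d)) by lra. apply sqrt_le_1_alt.
    unfold A, B. pose proof (Rle_0_sqr (a*d-b*c)). unfold Rsqr in *. nra. }
  unfold A, B in *. nra.
Qed.

Lemma Cnorm_pow z k : Cnorm (Cpow z k) = Cnorm z ^ k.
Proof. induction k; simpl. unfold Cnorm; simpl. replace (1*1+0*0) with 1 by ring. apply sqrt_1.
  rewrite Cnorm_mul, IHk; reflexivity. Qed.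

Lemma Cnorm_m1 : Cnorm (Copp C1) = 1.
Proof. unfold Cnorm; simpl. replace (_ + _) with 1 by ring. apply sqrt_1. Qed.

Lemma Cnorm_eq0 z : Cnorm z = 0 -> z = C0.
Proof. destruct z as [a b]; unfold Cnorm; simpl; intro H.
  apply sqrt_eq_0 in H; [|nra]. unfold C0; f_equal; nra. Qed.

Lemma Cnorm_C0 : Cnorm C0 = 0.
Proof. unfold Cnorm; simpl. replace (0*0+0*0) with 0 by ring. apply sqrt_0. Qed.

Lemma cis_pow a k : Cpow (mkC (cos a) (sin a)) k = mkC (cos (INR k * a)) (sin (INR k * a)).
Proof. induction k. simpl. rewrite Rmult_0_l, cos_0, sin_0. reflexivity.
  rewrite S_INR. simpl Cpow. rewrite IHk. unfold Cmul; simpl.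
  replace ((INR k + 1) * a) with (a + INR k * a) by ring.
  rewrite cos_plus, sin_plus. f_equal; ring. Qed.

Lemma Cnorm_cis a : Cnorm (mkC (cos a) (sin a)) = 1.
Proof. unfold Cnorm; simpl. rewrite <- sqrt_1. f_equal. pose proof (sin2_cos2 a). unfold Rsqr in H; lra. Qed.

Lemma Cnorm_opp z : Cnorm (Copp z) = Cnorm z.
Proof. unfold Cnorm; simpl. f_equal; ring. Qed.

Lemma Cnorm_sub1 z : Cnorm (Csub C1 z) <= 1 + Cnorm z.
Proof. unfold Csub. eapply Rle_trans. apply Cnorm_add. rewrite Cnorm_opp.
  replace (Cnorm C1) with 1. lra. unfold Cnorm; simpl. symmetry; replace (_ + _) with 1 by ring; apply sqrt_1. Qed.

Theorem mainTheorem3 (m : nat) (Hm : (2 <= m)%nat) (c : R)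
  (Hc_lb : forall j : nat, (1 <= j <= m - 1)%nat ->
             c <= 1 - cos (2 * PI * INR j / INR m))
  (Hc_att : exists j : nat, (1 <= j <= m - 1)%nat /\
             c = 1 - cos (2 * PI * INR j / INR m)) :
  forall n j : nat, (m <= n)%nat -> (1 <= j <= m - 1)%nat ->
    Cnorm (dpoly n (Cpow (omega m) j))
      <= (INR m - 1) * Rpower (2 / c) ((INR m - 2) / 2).
Proof.
  intros n j Hn Hj.
  assert (Hm0 : 0 < INR m) by (apply lt_0_INR; lia).
  assert (Hc2 : c <= 2) by (destruct Hc_att as [j0 [_ ->]]; pose proof (COS_bound (2 * PI * INR j0 / INR m)); lra).
  assert (Hc0 : 0 < c).
  { destruct Hc_att as [j0 [Hj0 ->]].
    replace (2 * PI * INR j0 / INR m) with (2 * (PI * INR j0 / INR m)) by (field; lra).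
    rewrite cos_2a_sin. assert (0 < sin (PI * INR j0 / INR m)); [|nra].
    apply sin_gt_0. apply Rmult_lt_0_compat. apply Rmult_lt_0_compat. apply PI_RGT_0.
    apply lt_0_INR; lia. apply Rinv_0_lt_compat; lra.
    apply Rmult_lt_reg_r with (INR m). lra. unfold Rdiv. rewrite Rmult_assoc, Rinv_l by lra.
    rewrite Rmult_1_r. apply Rmult_lt_compat_l. apply PI_RGT_0. apply lt_INR; lia. }
  set (th := 2 * PI * INR j / INR m).
  assert (Hq : Cpow (omega m) j = mkC (cos th) (sin th)).
  { unfold omega. rewrite cis_pow. unfold th. f_equal; f_equal; field; lra. }
  rewrite Hq. set (q := mkC (cos th) (sin th)).
  assert (Hqm : Cpow q m = C1).
  { unfold q. rewrite cis_pow. replace (INR m * th) with (0 + 2 * INR j * PI) by (unfold th; field; lra).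
    rewrite cos_period, sin_period, cos_0, sin_0. reflexivity. }
  assert (Hqma : forall a, Cpow q (m * a) = C1).
  { intro a. rewrite Cpow_mul, Hqm. apply Cpow_1. }
  set (x := sqrt (2 / c)).
  assert (Hx1 : 1 <= x).
  { unfold x. rewrite <- sqrt_1. apply sqrt_le_1_alt. apply Rmult_le_reg_r with c. lra.
    unfold Rdiv. rewrite Rmult_assoc, Rinv_l by lra. lra. }
  assert (H1q : sqrt (2 * c) <= Cnorm (Csub C1 q)).
  { unfold Cnorm, q, Csub; simpl. apply sqrt_le_1_alt.
    pose proof (Hc_lb j Hj). fold th in H. pose proof (sin2_cos2 th). unfold Rsqr in H0. nra. }
  assert (Hs2c : 0 < sqrt (2 * c)) by (apply sqrt_lt_R0; lra).
  assert (Hxs : x * sqrt (2 * c) = 2).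
  { unfold x. rewrite <- sqrt_mult by (try apply Rlt_le, Rdiv_lt_0_compat; lra).
    replace (2 / c * (2 * c)) with (2 * 2) by (field; lra). rewrite sqrt_square; lra. }
  assert (Hqint : forall t, Cnorm (qint q t) <= x).
  { intro t. pose proof (qint_geom q t) as G. apply (f_equal Cnorm) in G.
    rewrite Cnorm_mul in G. pose proof (Cnorm_sub1 (Cpow q t)).
    rewrite Cnorm_pow in H. unfold q in H. rewrite Cnorm_cis, pow1 in H. fold q in H.
    pose proof (Cnorm_ge0 (qint q t)).
    apply Rmult_le_reg_r with (sqrt (2 * c)). lra. rewrite Hxs.
    eapply Rle_trans. apply Rmult_le_compat_l. lra. apply H1q. lra. }
  assert (Hqint0 : forall a, qint q (m * a) = C0).
  { intro a. pose proof (qint_geom q (m * a)) as G. rewrite Hqma in G.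
    apply (f_equal Cnorm) in G. rewrite Cnorm_mul in G.
    replace (Csub C1 C1) with C0 in G by ring. rewrite Cnorm_C0 in G.
    apply Cnorm_eq0. apply Rmult_integral in G. destruct G; auto. lra. }
  assert (Hrec : forall k, Cnorm (dpoly (S k) q) <= Cnorm (dpoly k q) * x + 1).
  { intro k. rewrite dpoly_rec. eapply Rle_trans. apply Cnorm_add.
    rewrite !Cnorm_mul, !Cnorm_pow, Cnorm_m1. unfold q at 2 3. rewrite Cnorm_cis, !pow1.
    pose proof (Cnorm_ge0 (dpoly k q)). pose proof (Hqint (S k)). fold q. nra. }
  set (s := (n mod m)%nat).
  assert (Hs : (s < m)%nat) by (apply Nat.mod_upper_bound; lia).
  assert (Hnm : (1 <= n / m)%nat) by (apply Nat.div_le_lower_bound; lia).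
  destruct (m * (n / m))%nat as [|N'] eqn:EN; [nia|].
  assert (Hns : n = (S N' + s)%nat) by (rewrite <- EN; unfold s; apply Nat.div_mod; lia).
  assert (HQ0 : qint q (S N') = C0) by (rewrite <- EN; apply Hqint0).
  assert (HQ1 : Cpow q (S N') = C1) by (rewrite <- EN; apply Hqma).
  assert (HdN : dpoly (S N') q = Cmul (Cpow (Copp C1) (S N')) (Cpow q (S N' * N' / 2))).
  { rewrite dpoly_rec, HQ0. ring. }
  assert (HdN1 : dpoly (S (S N')) q = C0).
  { rewrite dpoly_rec, qint_S, HdN, HQ0, HQ1.
    replace (S (S N') * S N' / 2)%nat with (S N' * N' / 2 + S N')%nat.
    2: { replace (S (S N') * S N')%nat with (S N' * N' + S N' * 2)%nat by ring.
         rewrite Nat.div_add; lia. }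
    rewrite Cpow_add, HQ1. simpl Cpow. ring. }
  assert (Hind : forall t, Cnorm (dpoly (S (S N') + t) q) <= INR t * x ^ (t - 1)).
  { induction t.
    - rewrite Nat.add_0_r, HdN1, Cnorm_C0. simpl; lra.
    - rewrite Nat.add_succ_r. eapply Rle_trans. apply Hrec.
      rewrite S_INR. destruct t as [|t].
      + rewrite Nat.add_0_r, HdN1, Cnorm_C0. simpl. lra.
      + replace (S t - 1)%nat with t in IHt by lia. replace (S (S t) - 1)%nat with (S t) by lia.
        simpl pow. pose proof (pow_R1_Rle x t Hx1). pose proof (pos_INR (S t)). nra. }
  assert (Hpow : Rpower (2 / c) ((INR m - 2) / 2) = x ^ (m - 2)).
  { replace ((INR m - 2) / 2) with (/ 2 * INR (m - 2)).
    2: { rewrite minus_INR by lia. simpl INR. field. }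
    rewrite <- Rpower_mult, Rpower_sqrt, Rpower_pow. reflexivity.
    apply sqrt_lt_R0. apply Rdiv_lt_0_compat; lra. apply Rdiv_lt_0_compat; lra. }
  rewrite Hpow, Hns.
  assert (HINR : 1 <= INR m - 1) by (apply le_INR in Hm; simpl in Hm; lra).
  destruct s as [|s'].
  - rewrite Nat.add_0_r, HdN, Cnorm_mul, !Cnorm_pow, Cnorm_m1. unfold q; rewrite Cnorm_cis, !pow1.
    pose proof (pow_R1_Rle x (m - 2) Hx1). nra.
  - rewrite Nat.add_succ_r. change (S (S N' + s')) with (S (S N') + s')%nat.
    eapply Rle_trans. apply Hind. apply Rmult_le_compat.
    apply pos_INR. apply pow_le; lra.
    assert (INR s' <= INR (m - 1)) by (apply le_INR; lia). rewrite minus_INR in H by lia. simpl in H. lra.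
    apply Rle_pow. lra. lia.
Qed.
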